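(* Let $f:\mathbb{R}^n \to \mathbb{R}$ be strongly convex and piecewise linear-quadratic, with a fixed representation by polyhedral sets $F_1,\dots,F_p$ as described in the context, and let $C \subset \mathbb{R}^n$ be a nonempty closed convex set such that for every $x \in \mathbb{R}^n$ with $F_x \cap C \neq \emptyset$ the collection $\{F_x,C\}$ is boundedly linearly regular. Then for every $R>0$ there exists $L>0$ such that for all $x \in B_R$ and all $x^* \in \partial f(x)$, \[ \operatorname{dist}_f^{x^*}(x,C)^2 \le L \cdot \operatorname{dist}(x, C)^2 . \]
   Context: $f$ is strongly convex if there is $\alpha>0$ with $f(y)\ge f(x)+\langle x^*,y-x\rangle+\frac{\alpha}{2}\|y-x\|_2^2$ for all $x,y\in\mathbb{R}^n$, $x^*\in\partial f(x)$. A convex $f:\mathbb{R}^n\to\mathbb{R}$ is piecewise linear-quadratic if there are finitely many polyhedral sets $F_i\subset\mathbb{R}^n$, $i\in I=\{1,\dots,p\}$, whose union is $\mathbb{R}^n$, such that on each $F_i$, $f(x)=\frac12\langle x,A_ix\rangle+\langle a_i,x\rangle+\alpha_i$ with symmetric positive semidefinite $A_i$, $a_i\in\mathbb{R}^n$, $\alpha_i\in\mathbb{R}$. For $x\in\mathbb{R}^n$ set $I_f(x)=\{i: x\in F_i\}$ and $F_x=\bigcap_{i\in I_f(x)}F_i$. $B_R=\{x:\|x\|_2\le R\}$. A collection of closed convex sets $C_1,\dots,C_r$ with nonempty intersection $D=\bigcap_i C_i$ is boundedly linearly regular if for every $R>0$ there is $\gamma>0$ with $\operatorname{dist}(x,D)^2\le\gamma\sum_{i=1}^r\operatorname{dist}(x,C_i)^2$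 for all $x\in B_R$ ($\operatorname{dist}$ = Euclidean distance). For $x^*\in\partial f(x)$, $D_f^{x^*}(x,y)=f(y)-f(x)-\langle x^*,y-x\rangle$ and $\operatorname{dist}_f^{x^*}(x,C)^2:=\min_{y\in C}D_f^{x^*}(x,y)$. *)

(* Defs.v *)
From HB Require Import structures.
From mathcomp Require Import all_boot all_order all_algebra.
From mathcomp Require Import all_classical all_reals all_analysis.
Set Implicit Arguments. Unset Strict Implicit. Unset Printing Implicit Defensive.
Import Order.TTheory GRing.Theory Num.Theory.
Import numFieldNormedType.Exports.
Local Open Scope classical_set_scope.
Local Open Scope ring_scope.

Section Defs.
Variables (R : realType) (n : nat).
Notation vec := 'cV[R]_n.

Definition P_ip (x y : vec) : R := \sum_(i < n) x i 0 * y i 0.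
Definition P_norm2 (x : vec) : R := Num.sqrt (P_ip x x).

Definition P_eball_R (r : R) : set vec := [set x | P_norm2 x <= r].

Definition P_edist (x : vec) (C : set vec) : R := inf [set P_norm2 (x - y) | y in C].

Definition P_convex_set (S : set vec) : Prop :=
  forall x y (t : R), S x -> S y -> 0 <= t <= 1 -> S (t *: x + (1 - t) *: y).

Definition P_convex_fun (f : vec -> R) : Prop :=
  forall x y (t : R), 0 <= t <= 1 ->
    f (t *: x + (1 - t) *: y) <= t * f x + (1 - t) * f y.

Definition P_subgrad (f : vec -> R) (x xs : vec) : Prop :=
  forall y, f x + P_ip xs (y - x) <= f y.

Definition P_strongly_convex (f : vec -> R) : Prop :=
  exists2 alpha : R, 0 < alpha & forall x y xs, P_subgrad f x xs ->
    f x + P_ip xs (y - x) + alpha / 2 * (P_norm2 (y - x)) ^+ 2 <= f y.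

Definition P_polyhedral (P : set vec) : Prop :=
  exists m (a : 'I_m -> vec) (b : 'I_m -> R),
    P = [set x | forall j, P_ip (a j) x <= b j].

Definition P_symmetric_psd (A : 'M[R]_n) : Prop :=
  A^T = A /\ forall x : vec, 0 <= P_ip x (A *m x).

Definition P_plq_rep (f : vec -> R) (p : nat) (F : 'I_p -> set vec)
  (A : 'I_p -> 'M[R]_n) (a : 'I_p -> vec) (al : 'I_p -> R) : Prop :=
  (forall i, P_polyhedral (F i)) /\
  (\bigcup_(i in [set: 'I_p]) F i = [set: vec]) /\
  (forall i, P_symmetric_psd (A i)) /\
  (forall i x, F i x -> f x = 1 / 2 * P_ip x (A i *m x) + P_ip (a i) x + al i).

Definition P_Fx (p : nat) (F : 'I_p -> set vec) (x : vec) : set vec :=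
  [set y | forall i, F i x -> F i y].

Definition P_bdd_lin_regular (r : nat) (Cs : 'I_r -> set vec) : Prop :=
  (forall i, closed (Cs i) /\ P_convex_set (Cs i)) /\
  (\bigcap_(i in [set: 'I_r]) Cs i !=set0) /\
  forall rad : R, 0 < rad -> exists2 g : R, 0 < g & forall x, P_eball_R rad x ->
    P_edist x (\bigcap_(i in [set: 'I_r]) Cs i) ^+ 2
      <= g * \sum_(i < r) P_edist x (Cs i) ^+ 2.

Definition P_pair_sets (C1 C2 : set vec) : 'I_2 -> set vec :=
  fun i => if val i == 0%N then C1 else C2.

(* Bregman distance and dist_f^{x*}(x,C)^2 := min_{y in C} D_f^{x*}(x,y) *)
Definition P_bregman (f : vec -> R) (xs x y : vec) : R := f y - f x - P_ip xs (y - x).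
Definition P_bregman_dist2 (f : vec -> R) (xs x : vec) (C : set vec) : R :=
  inf [set P_bregman f xs x y | y in C].

End Defs.

(* Main.v *)
Require Import Defs.
From HB Require Import structures.
From mathcomp Require Import all_boot all_order all_algebra.
From mathcomp Require Import all_classical all_reals all_analysis.
From mathcomp Require Import ring lra.
Import Order.TTheory GRing.Theory Num.Theory.
Import numFieldNormedType.Exports.
Local Open Scope classical_set_scope.
Local Open Scope ring_scope.
Section Aux.
Variables (R : realType) (n : nat).
Local Notation vec := 'cV[R]_n.
Implicit Types (u v w x y z d : vec).

Lemma ipDl u v w : P_ip (u + v) w = P_ip u w + P_ip v w.
Proof. by rewrite /P_ip -big_split; apply: eq_bigr => i _; rewrite mxE mulrDl. Qed.
Lemma ipZl s u w : P_ip (s *: u) w = s * P_ip u w.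
Proof. by rewrite /P_ip mulr_sumr; apply: eq_bigr => i _; rewrite mxE mulrA. Qed.
Lemma ipC u v : P_ip u v = P_ip v u.
Proof. by apply: eq_bigr => i _; rewrite mulrC. Qed.
Lemma ipNl u w : P_ip (- u) w = - P_ip u w.
Proof. by rewrite /P_ip -sumrN; apply: eq_bigr => i _; rewrite mxE mulNr. Qed.
Lemma ipDr u v w : P_ip w (u + v) = P_ip w u + P_ip w v.
Proof. by rewrite ipC ipDl ![P_ip _ w]ipC. Qed.
Lemma ipZr s u w : P_ip w (s *: u) = s * P_ip w u.
Proof. by rewrite ipC ipZl ipC. Qed.
Lemma ipNr u w : P_ip w (- u) = - P_ip w u.
Proof. by rewrite ipC ipNl ipC. Qed.
Lemma ip0r u : P_ip u 0 = 0.
Proof. by rewrite /P_ip big1 // => i _; rewrite mxE mulr0. Qed.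

Lemma ip_ge0 v : 0 <= P_ip v v.
Proof. by apply: sumr_ge0 => i _; rewrite -expr2 sqr_ge0. Qed.
Lemma N_ge0 v : 0 <= P_norm2 v.
Proof. exact: sqrtr_ge0. Qed.
Lemma N_sq v : P_norm2 v ^+ 2 = P_ip v v.
Proof. by rewrite sqr_sqrtr // ip_ge0. Qed.
Lemma NN v : P_norm2 (- v) = P_norm2 v.
Proof. by rewrite /P_norm2 ipNl ipNr opprK. Qed.

Lemma coord_le v i : `|v i 0| <= P_norm2 v.
Proof.
rewrite -sqrtr_sqr /P_norm2 ler_sqrt ?ip_ge0 // /P_ip (bigD1 i) //= expr2.
by rewrite lerDl sumr_ge0 // => j _; rewrite -expr2 sqr_ge0.
Qed.

Lemma N_le_sum v : P_norm2 v <= \sum_k `|v k 0|.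
Proof.
have S0 : 0 <= \sum_k `|v k 0| by apply: sumr_ge0.
rewrite -(ger0_norm S0) -sqrtr_sqr /P_norm2 ler_sqrt ?sqr_ge0 // expr2.
rewrite /P_ip mulr_suml; apply: ler_sum => k _.
rewrite (le_trans (ler_norm _)) // normrM ler_wpM2l //.
by rewrite (bigD1 k) //= lerDl sumr_ge0.
Qed.

Lemma quad_bound (A : 'M[R]_n) d r : 0 <= r -> (forall k, `|d k 0| <= r) ->
  `|P_ip d (A *m d)| <= (\sum_i \sum_k `|A i k|) * r ^+ 2.
Proof.
move=> r0 dr; rewrite /P_ip (le_trans (ler_norm_sum _ _ _)) //.
rewrite mulr_suml; apply: ler_sum => i _; rewrite normrM mxE.
rewrite expr2 mulrCA ler_pM //.
rewrite mulr_suml (le_trans (ler_norm_sum _ _ _)) //; apply: ler_sum => k _.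
by rewrite normrM ler_wpM2l.
Qed.

Lemma lin_bound (a : vec) z r : 0 <= r -> (forall k, `|z k 0| <= r) ->
  `|P_ip a z| <= (\sum_k `|a k 0|) * r.
Proof.
move=> r0 zr; rewrite /P_ip (le_trans (ler_norm_sum _ _ _)) //.
rewrite mulr_suml; apply: ler_sum => i _; by rewrite normrM ler_wpM2l.
Qed.

Lemma coord_le_mx v i : `|v i 0| <= `|v|.
Proof.
rewrite [X in _ <= X]mx_normrE.
exact: (le_bigmax _ (fun ij : 'I_n * 'I_1 => `|v ij.1 ij.2|) (i, 0)).
Qed.

Lemma mx_le_N v : `|v| <= P_norm2 v.
Proof.
rewrite [X in X <= _]mx_normrE; apply: bigmax_le => [|[i j] _]; first exact: N_ge0.
by rewrite /= (ord1 j) coord_le.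
Qed.

End Aux.
Section Local.
Variables (R : realType) (n : nat).
Local Notation vec := 'cV[R]_n.

Definition qf (A : 'M[R]_n) (a : vec) (al : R) (z : vec) :=
  1 / 2 * P_ip z (A *m z) + P_ip a z + al.

Lemma q_expand A a al (x d : vec) s :
  qf A a al (x + s *: d) = qf A a al x
    + s * (1 / 2 * (P_ip x (A *m d) + P_ip d (A *m x)) + P_ip a d)
    + s ^+ 2 * (1 / 2 * P_ip d (A *m d)).
Proof.
rewrite /qf mulmxDr -scalemxAr !ipDl !ipDr !ipZl !ipZr; ring.
Qed.

Lemma polyhedral_closed_eventually (F : set vec) (x d : vec) :
  P_polyhedral F ->
  \forall t \near (0:R)^'+, F (x - t *: d) -> F x.
Proof.
move=> [m [a [b ->]]] /=.
have [Fx|nFx] := pselect (forall j, P_ip (a j) x <= b j).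
  by apply: filterE => t _.
move/existsNP: nFx => [j /negP]; rewrite -ltNge => bj.
set c := `|P_ip (a j) d|.
have c1 : 0 < c + 1 by have := normr_ge0 (P_ip (a j) d); rewrite -/c; lra.
have gp : 0 < (P_ip (a j) x - b j) / (c + 1) by rewrite divr_gt0 // subr_gt0.
near=> t => /(_ j).
rewrite ipDr ipNr ipZr.
have t0 : 0 < t by near: t; exact: nbhs_right_gt.
have tl : t < (P_ip (a j) x - b j) / (c + 1) by near: t; exact: nbhs_right_lt.
rewrite ltr_pdivlMr // in tl.
have h1 : t * P_ip (a j) d <= t * c by apply: ler_wpM2l; [exact: ltW | exact: ler_norm].
have h2 : 0 <= c by exact: normr_ge0.
move=> h; nra.
Unshelve. all: by end_near.
Qed.

Lemma exists_t0 p (F : 'I_p -> set vec) (x d : vec) :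
  (forall j, P_polyhedral (F j)) ->
  exists t0 : R, [/\ 0 < t0, t0 <= 1 & forall j, F j (x - t0 *: d) -> F j x].
Proof.
move=> Fp.
have H : \forall t \near (0:R)^'+, forall j, F j (x - t *: d) -> F j x.
  by apply: filter_forall => j; exact: polyhedral_closed_eventually.
have H0 := @nbhs_right_gt R 0.
have H1 := @nbhs_right_lt R 0 1 ltr01.
have [t [[t0 t1] tj]] := filter_ex (filterI (filterI H0 H1) H).
by exists t; split => //; exact: ltW.
Qed.

Lemma local_bound (f : vec -> R) p (F : 'I_p -> set vec) (A : 'I_p -> 'M[R]_n)
  (a : 'I_p -> vec) (al : 'I_p -> R) (x xs y : vec) :
  P_plq_rep f F A a al -> P_subgrad f x xs -> P_Fx F x y ->
  P_bregman f xs x y <=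
    (\sum_j \sum_i \sum_k `|A j i k|) * P_norm2 (y - x) ^+ 2.
Proof.
move=> [Fp [cov [_ fq]]] sg Fxy.
set d := y - x.
have [t0 [t0p t01 Ht]] := @exists_t0 p F x d Fp.
set z := x - t0 *: d.
have : [set: vec] z by [].
rewrite -cov => -[j _ Fjz].
have Fjx := Ht j Fjz.
have Fjy := Fxy j Fjx.
have fx := fq j x Fjx; have fy := fq j y Fjy; have fz := fq j z Fjz.
rewrite -/(qf (A j) (a j) (al j) x) in fx.
rewrite -/(qf (A j) (a j) (al j) y) in fy.
rewrite -/(qf (A j) (a j) (al j) z) in fz.
have ey : y = x + 1 *: d by rewrite scale1r /d addrC subrK.
have ez : z = x + (- t0) *: d by rewrite scaleNr.
have := q_expand (A j) (a j) (al j) x d 1; rewrite -ey => Ey; rewrite Ey in fy.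
have := q_expand (A j) (a j) (al j) x d (- t0); rewrite -ez => Ez; rewrite Ez in fz.
have sgz := sg z.
have e : z - x = - (t0 *: d) by rewrite /z addrAC subrr add0r.
rewrite e ipNr ipZr in sgz.
rewrite /P_bregman -/d fy fx.
rewrite fx fz in sgz.
set B := (1 / 2 * (P_ip x (A j *m d) + P_ip d (A j *m x)) + P_ip (a j) d) in fy sgz *.
set g := 1 / 2 * P_ip d (A j *m d) in fy sgz *.
set I := P_ip xs d in sgz *.
have h1 : B - I <= t0 * g by nra.
have hg := ler_norm g.
have h2 : t0 * g <= `|g|.
  apply: (le_trans (ler_wpM2l (ltW t0p) hg)).
  by rewrite -[X in _ <= X]mul1r ler_wpM2r.
have h3 : `|g| <= 1 / 2 * ((\sum_i \sum_k `|A j i k|) * P_norm2 d ^+ 2).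
  rewrite /g normrM ger0_norm ?divr_ge0 // ler_wpM2l ?divr_ge0 //.
  apply: quad_bound; first exact: N_ge0.
  by move=> k; apply: coord_le.
have h4 : (\sum_i \sum_k `|A j i k|) <= \sum_j \sum_i \sum_k `|A j i k|.
  rewrite (bigD1 j) //= lerDl; apply: sumr_ge0 => j' _.
  by apply: sumr_ge0 => i _; apply: sumr_ge0.
have h5 : 0 <= P_norm2 d ^+ 2 by rewrite sqr_ge0.
have h6 := ler_wpM2r h5 h4.
rewrite -/d.
lra.
Qed.

End Local.
Section Topo.
Variables (R : realType) (n : nat).
Local Notation vec := 'cV[R]_n.

Lemma lip_cont (g : vec -> R) (c : R) : 0 <= c ->
  (forall v w, `|g v - g w| <= c * `|v - w|) -> continuous g.
Proof.
move=> c0 Hg v; apply/(@cvgrPdist_lt _ _ _ (nbhs v) (nbhs_filter v)) => e e0.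
have ce : 0 < e / (c + 1) by rewrite divr_gt0 // ltr_wpDl.
have : \forall w \near v, ball v (e / (c + 1)) w by exact: nbhsx_ballx.
apply: filterS => w.
rewrite -ball_normE /= => vw.
apply: (le_lt_trans (Hg v w)).
rewrite ltr_pdivlMr ?ltr_wpDl // in vw.
have h0 : 0 <= `|v - w| by [].
nra.
Qed.

Lemma ip_cont (a : vec) : continuous (fun v : vec => P_ip a v).
Proof.
apply: (@lip_cont _ (\sum_k `|a k 0|)); first by apply: sumr_ge0.
move=> v w; rewrite -ipNr -ipDr; apply: lin_bound => // k.
exact: coord_le_mx.
Qed.

Lemma polyhedral_closed (F : set vec) : P_polyhedral F -> closed F.
Proof.
move=> [m [a [b ->]]].
have -> : [set x : vec | forall j, P_ip (a j) x <= b j] =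
  \bigcap_(j in [set: 'I_m]) ((fun v => P_ip (a j) v) @^-1` [set r | r <= b j]).
  by rewrite predeqE => x; split => [H j _|H j]; [exact: H | exact: H].
apply: closed_bigI => j _; apply: preimage_closed; last exact: closed_le.
by move=> v _; exact: ip_cont.
Qed.

Lemma Fx_closed p (F : 'I_p -> set vec) x : (forall i, closed (F i)) ->
  closed (P_Fx F x).
Proof.
move=> Fc.
have -> : P_Fx F x = \bigcap_(i in [set i | F i x]) F i.
  by rewrite predeqE => y; split => H i Hi; exact: H.
by apply: closed_bigI => i _; exact: Fc.
Qed.

Lemma trmx_cont : continuous (fun w : 'rV[R]_n => (w^T : vec)).
Proof.
move=> w B /= [P HP sPB].
exists (fun i j => P j i) => [i j|N HN]; first by have := HP j i; rewrite mxE.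
by apply: sPB => i j /=; rewrite mxE; exact: HN.
Qed.

End Topo.
Section Sep.
Variables (R : realType) (n : nat).
Local Notation vec := 'cV[R]_n.

Lemma box_compact (rad : R) :
  compact [set (w^T : vec) | w in [set w : 'rV[R]_n | forall i,
     (fun _ : 'I_n => `[- rad, rad]%classic) i (w ord0 i)]].
Proof.
have Hc : compact [set w : 'rV[R]_n | forall i,
     (fun _ : 'I_n => `[- rad, rad]%classic) i (w ord0 i)].
  exact: (@rV_compact R n (fun _ => `[- rad, rad]%classic) (fun i => @segment_compact R _ _)).
exact: (continuous_compact (continuous_subspaceT (@trmx_cont R n)) Hc).
Qed.

Lemma sepK (K C : set vec) (rad : R) : closed K -> closed C -> C !=set0 ->
  (forall x, K x -> ~ C x) ->
  exists2 del : R, 0 < del & forall x c, K x -> P_eball_R rad x -> C c ->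
    del <= P_norm2 (x - c).
Proof.
move=> Kc Cc [c0 Cc0] KC.
pose h2 (v : vec) := inf [set `|v - c| | c in C].
have hlb v : has_lbound [set `|v - c| | c in C].
  by exists 0 => _ [c _ <-].
have hle v c : C c -> h2 v <= `|v - c|.
  by move=> Cc'; apply: ge_inf => //; exists c.
have hne v : [set `|v - c| | c in C] !=set0 by exists `|v - c0|, c0.
have hlip v w : h2 v <= `|v - w| + h2 w.
  rewrite -lerBlDl; apply: lb_le_inf => // _ [c Cc' <-].
  rewrite lerBlDl (le_trans (hle v c Cc')) //.
  by have := ler_normD (v - w) (w - c); rewrite addrA subrK.
have hcont : continuous h2.
  apply: (@lip_cont R n h2 1) => // v w; rewrite mul1r ler_norml.
  have := hlip v w; have := hlip w v; rewrite distrC; lra.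
set Box := [set (w^T : vec) | w in [set w : 'rV[R]_n | forall i,
     (fun _ : 'I_n => `[- rad, rad]%classic) i (w ord0 i)]].
have inBox x : P_eball_R rad x -> Box x.
  move=> xb; exists x^T; last by rewrite trmxK.
  move=> i /=; rewrite mxE in_itv /= -ler_norml.
  have h := @coord_le R n x i; have e : (0 : 'I_1) = ord0 by apply/val_inj.
  rewrite e in h; apply: le_trans h _; exact: xb.
have KKc : compact (Box `&` K) by apply: compact_closedI => //; exact: box_compact.
have [KK0|KK0] := pselect ((Box `&` K) !=set0); last first.
  exists 1 => // x c Kx xb; exfalso; apply: KK0.
  by exists x; split => //; exact: inBox.
have [cs csK csmin] := compact_EVT_min KK0 KKc (continuous_subspaceT hcont).
have /set_mem [_ Kcs] := csK.
have [r r0 Hr] : exists2 r : R, 0 < r & forall c, C c -> r <= `|cs - c|.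
  have : ~ closure C cs.
    by move=> H; apply: (KC _ Kcs); rewrite (closure_id C).1.
  move/existsNP => [B /not_implyP [/nbhs_ballP [r r0 rB] BC]].
  exists r => // c Cc'; rewrite leNgt; apply/negP => cr.
  apply: BC; exists c; split => //; apply: rB.
  by rewrite -ball_normE.
exists (h2 cs).
  by apply: (lt_le_trans r0); apply: lb_le_inf => // _ [c Cc' <-]; exact: Hr.
move=> x c Kx xb Cc'.
apply: le_trans (csmin x _) _; first by apply/mem_set; split => //; exact: inBox.
apply: le_trans (hle x c Cc') _.
exact: mx_le_N.
Qed.

End Sep.
Section Dist.
Variables (R : realType) (n : nat).
Local Notation vec := 'cV[R]_n.

Lemma closed_sep1 (C : set vec) x : closed C -> ~ C x ->
  exists2 r : R, 0 < r & forall c, C c -> r <= P_norm2 (x - c).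
Proof.
move=> Cc nCx.
have : ~ closure C x.
  by move=> H; apply: nCx; rewrite (closure_id C).1.
move/existsNP => [B /not_implyP [/nbhs_ballP [r r0 rB] BC]].
exists r => // c Cc'; apply: le_trans (@mx_le_N R n (x - c)); rewrite leNgt; apply/negP => cr.
apply: BC; exists c; split => //; apply: rB.
by rewrite -ball_normE.
Qed.

Lemma ed_le (C : set vec) x c : C c -> P_edist x C <= P_norm2 (x - c).
Proof.
move=> Cc; apply: ge_inf; last by exists c.
by exists 0 => _ [c' _ <-]; exact: N_ge0.
Qed.

Lemma ed_lb (C : set vec) x (del : R) : C !=set0 ->
  (forall c, C c -> del <= P_norm2 (x - c)) -> del <= P_edist x C.
Proof.
move=> [c0 Cc0] H; apply: lb_le_inf; first by exists (P_norm2 (x - c0)), c0.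
by move=> _ [c Cc <-]; exact: H.
Qed.

Lemma ed_ge0 (C : set vec) x : C !=set0 -> 0 <= P_edist x C.
Proof. by move=> C0; apply: ed_lb => // c _; exact: N_ge0. Qed.

Lemma ed_adh (C : set vec) x (e : R) : C !=set0 -> 0 < e ->
  exists2 c, C c & P_norm2 (x - c) < P_edist x C + e.
Proof.
move=> [c0 Cc0] e0.
have hs : has_inf [set P_norm2 (x - c) | c in C].
  split; first by exists (P_norm2 (x - c0)), c0.
  by exists 0 => _ [c _ <-]; exact: N_ge0.
have [_ [c Cc <-] H] := inf_adherent e0 hs.
by exists c.
Qed.

Lemma bd_le (f : vec -> R) (C : set vec) x xs c : P_subgrad f x xs -> C c ->
  P_bregman_dist2 f xs x C <= P_bregman f xs x c.
Proof.
move=> sg Cc; apply: ge_inf; last by exists c.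
exists 0 => _ [y _ <-]; rewrite /P_bregman.
by have := sg y; lra.
Qed.

Lemma N0 : P_norm2 (0 : vec) = 0.
Proof. by rewrite /P_norm2 ip0r sqrtr0. Qed.

Lemma fbound (f : vec -> R) p (F : 'I_p -> set vec) (A : 'I_p -> 'M[R]_n)
  (a : 'I_p -> vec) (al : 'I_p -> R) (r : R) :
  P_plq_rep f F A a al -> 0 <= r ->
  exists2 B0 : R, 0 <= B0 & forall z : vec, (forall k, `|z k 0| <= r) -> `|f z| <= B0.
Proof.
move=> [_ [cov [_ fq]]] r0.
pose T i := 1 / 2 * ((\sum_i' \sum_k `|A i i' k|) * r ^+ 2)
   + (\sum_k `|a i k 0|) * r + `|al i|.
have T0 i : 0 <= T i.
  rewrite /T; apply: addr_ge0; last exact: normr_ge0.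
  apply: addr_ge0; last by apply: mulr_ge0 => //; apply: sumr_ge0.
  apply: mulr_ge0 => //; apply: mulr_ge0; last exact: sqr_ge0.
  by apply: sumr_ge0 => i' _; apply: sumr_ge0.
exists (\sum_i T i); first by apply: sumr_ge0.
move=> z zr.
have : [set: vec] z by [].
rewrite -cov => -[i _ Fiz].
rewrite (fq i z Fiz); apply: (@le_trans _ _ (T i)); last first.
  by rewrite (bigD1 i) //= lerDl sumr_ge0.
rewrite /T (le_trans (ler_normD _ _)) // lerD2r (le_trans (ler_normD _ _)) //.
apply: lerD; last exact: lin_bound.
rewrite normrM ger0_norm ?divr_ge0 // ler_wpM2l ?divr_ge0 //.
exact: quad_bound.
Qed.

End Dist.
Arguments bd_le {R n f C x xs c}.
Arguments closed_sep1 {R n C x}.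
Arguments ed_le {R n C} x {c}.
Arguments ed_lb {R n C x del}.
Arguments ed_ge0 {R n C} x.
Arguments ed_adh {R n C} x {e}.
Arguments local_bound {R n f p F A a al x xs y}.
Arguments N_ge0 {R n}.
Arguments NN {R n}.
Arguments N_le_sum {R n}.
Arguments coord_le {R n}.
Arguments sepK {R n K C} rad.
Arguments Fx_closed {R n p F} x.
Arguments polyhedral_closed {R n F}.
Arguments fbound {R n f p F A a al r}.
Arguments N0 {R n}.
Theorem theorem3p5 (R : realType) (n p : nat) (f : 'cV[R]_n -> R)
  (F : 'I_p -> set 'cV[R]_n) (A : 'I_p -> 'M[R]_n) (a : 'I_p -> 'cV[R]_n)
  (al : 'I_p -> R) (C : set 'cV[R]_n) :
  P_convex_fun f -> P_strongly_convex f -> P_plq_rep f F A a al ->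
  C !=set0 -> closed C -> P_convex_set C ->
  (forall x, P_Fx F x `&` C !=set0 -> P_bdd_lin_regular (P_pair_sets (P_Fx F x) C)) ->
  forall rad : R, 0 < rad -> exists2 L : R, 0 < L &
    forall x xs, P_eball_R rad x -> P_subgrad f x xs ->
      P_bregman_dist2 f xs x C <= L * P_edist x C ^+ 2.
Proof.
move=> _ _ hrep [c0 Cc0] Cc _ Hreg rad rad0.
have C0 : C !=set0 by exists c0.
have hrep' := hrep; move: hrep' => [Fp [cov [_ fq]]].
set Kmax := \sum_j \sum_i \sum_k `|A j i k|.
have Kmax0 : 0 <= Kmax.
  by apply: sumr_ge0 => j _; apply: sumr_ge0 => i _; apply: sumr_ge0.
pose FS (S : {set 'I_p}) := [set y : 'cV[R]_n | forall i, i \in S -> F i y].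
have FxS : forall (S : {set 'I_p}) x, (forall i, F i x <-> i \in S) -> P_Fx F x = FS S.
  move=> S x HS; rewrite predeqE => y; split => H i.
  - by move=> /HS; exact: H.
  - by move=> /HS; exact: H.
have claim : forall S : {set 'I_p}, exists L : R, 0 < L /\ forall x xs,
    P_eball_R rad x -> P_subgrad f x xs -> (forall i, F i x <-> i \in S) ->
    P_bregman_dist2 f xs x C <= L * P_edist x C ^+ 2.
  move=> S.
  have [[x0 [Sx0 ne]]|nex] := pselect (exists x0,
      (forall i, F i x0 <-> i \in S) /\ P_Fx F x0 `&` C !=set0).
  - have [_ [_ Hr]] := Hreg x0 ne.
    have [g g0 Hg] := Hr rad rad0.
    have hL : 0 <= 4 * Kmax * g.
      by apply: mulr_ge0; [apply: mulr_ge0 | exact: ltW].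
    exists (4 * Kmax * g + 1); split; first lra.
    move=> x xs xb sg Sx.
    have Fxe : P_Fx F x = P_Fx F x0 by rewrite (FxS S x Sx) (FxS S x0 Sx0).
    have dge0 := @ed_ge0 R n C x C0.
    have [xC|nxC] := pselect (C x).
      apply: le_trans (bd_le sg xC) _.
      rewrite /P_bregman !subrr ip0r subrr.
      by apply: mulr_ge0; [lra | exact: sqr_ge0].
    have [r r0 Hr1] := closed_sep1 Cc nxC.
    have dpos : 0 < P_edist x C := lt_le_trans r0 (ed_lb C0 Hr1).
    set D := P_Fx F x0 `&` C.
    have hde : P_edist x C <= P_edist x D.
      by apply: ed_lb => // c Dc; exact: ed_le Dc.2.
    have [y Dy Ny] := ed_adh x ne (lt_le_trans dpos hde).
    have Hgx := Hg x xb.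
    have capE : \bigcap_(i in [set: 'I_2]) P_pair_sets (P_Fx F x0) C i = D.
      rewrite predeqE => z; split.
      + by move=> H; split; [exact: (H ord0 I) | exact: (H ord_max I)].
      + by move=> [H1 H2] i _; rewrite /P_pair_sets; case: ifP.
    have e0 : P_edist x (P_Fx F x0) = 0.
      apply/eqP; rewrite eq_le; apply/andP; split.
        by have := @ed_le R n (P_Fx F x0) x x; rewrite subrr N0 -Fxe; apply.
      by apply: ed_ge0; exists x; rewrite -Fxe.
    rewrite capE big_ord_recr big_ord_recr big_ord0 /= in Hgx.
    rewrite /P_pair_sets /= e0 in Hgx.
    apply: le_trans (bd_le sg Dy.2) _.
    have yFx : P_Fx F x y by rewrite Fxe; exact: Dy.1.
    have Hl := local_bound hrep sg yFx.
    rewrite -/Kmax -opprB NN in Hl.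
    have hN := N_ge0 (x - y).
    set e := P_edist x D in Ny Hgx hde.
    set d := P_edist x C in Hgx dpos hde dge0 *.
    have hN2 : P_norm2 (x - y) ^+ 2 <= 4 * e ^+ 2 by nra.
    have h3 : Kmax * P_norm2 (x - y) ^+ 2 <= Kmax * (4 * e ^+ 2).
      by apply: ler_wpM2l.
    have h4 : Kmax * (4 * e ^+ 2) <= Kmax * (4 * (g * d ^+ 2)).
      apply: ler_wpM2l => //; apply: ler_wpM2l => //.
      by move: Hgx; rewrite expr0n /= !add0r.
    have h5 : 0 <= d ^+ 2 by exact: sqr_ge0.
    nra.
  - have [[x0 Sx0]|nx0] := pselect (exists x0, forall i, F i x0 <-> i \in S);
      last first.
      by exists 1; split => // x xs _ _ Sx; exfalso; apply: nx0; exists x.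
    have KC : forall x, P_Fx F x0 x -> ~ C x.
      by move=> x Kx Cx; apply: nex; exists x0; split => //; exists x.
    have [del del0 Hdel] := sepK rad
      (Fx_closed x0 (fun i => polyhedral_closed (Fp i))) Cc C0 KC.
    set M0 := \sum_k (rad + `|c0 k 0|).
    have M00 : 0 <= M0.
      by apply: sumr_ge0 => k _; apply: addr_ge0; [exact: ltW|exact: normr_ge0].
    have r00 : 0 <= rad + 2 * M0 by lra.
    have [B0 B00 HB] := fbound hrep r00.
    exists ((4 * B0 + 1) / del ^+ 2); split.
      by apply: divr_gt0; [lra | exact: exprn_gt0].
    move=> x xs xb sg Sx.
    have Fxe : P_Fx F x = P_Fx F x0 by rewrite (FxS S x Sx) (FxS S x0 Sx0).
    have Kx : P_Fx F x0 x by rewrite -Fxe.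
    have dl : del <= P_edist x C.
      by apply: ed_lb => // c Cc'; exact: Hdel.
    have dpos : 0 < P_edist x C by exact: lt_le_trans dl.
    have [y Cy Ny] := ed_adh x C0 dpos.
    have dM : P_edist x C <= M0.
      apply: le_trans (ed_le x Cc0) _; apply: le_trans (N_le_sum _) _.
      apply: ler_sum => k _; rewrite !mxE (le_trans (ler_normB _ _)) // lerD2r.
      exact: le_trans (coord_le x k) xb.
    set d := P_edist x C in dl dpos Ny dM *.
    have hNxy := N_ge0 (x - y).
    have xk : forall k, `|x k 0| <= rad by move=> k; exact: le_trans (coord_le x k) xb.
    have dk : forall k, `|x k 0 - y k 0| <= 2 * M0.
      move=> k; have := coord_le (x - y) k; rewrite !mxE => h; lra.
    have hx : forall k, `|x k 0| <= rad + 2 * M0 by move=> k; have := xk k; lra.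
    have hy : forall k, `|y k 0| <= rad + 2 * M0.
      move=> k; have -> : y k 0 = x k 0 - (x k 0 - y k 0) by rewrite opprB addrC subrK.
      by rewrite (le_trans (ler_normB _ _)) // lerD.
    have hz : forall k, `|(x + (x - y)) k 0| <= rad + 2 * M0.
      move=> k; rewrite !mxE.
      by rewrite (le_trans (ler_normD _ _)) // lerD.
    have fx := HB x hx; have fy := HB y hy; have fz := HB _ hz.
    have sgz := sg (x + (x - y)).
    have e1 : x + (x - y) - x = - (y - x) by rewrite opprB addrC addKr.
    rewrite e1 ipNr in sgz.
    apply: le_trans (bd_le sg Cy) _.
    rewrite /P_bregman.
    have h1 : f y - f x - P_ip xs (y - x) <= 4 * B0.
      have := ler_norm (f y); have := ler_norm (f (x + (x - y))).
      have := ler_norm (- f x); rewrite normrN.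
      lra.
    apply: le_trans h1 _.
    have h2 : del ^+ 2 <= d ^+ 2 by rewrite lerXn2r // ?nnegrE ltW.
    rewrite mulrAC ler_pdivlMr ?exprn_gt0 //.
    have h3 : 0 < del ^+ 2 by exact: exprn_gt0.
    nra.
have [Lf HL] := choice claim.
exists (1 + \sum_S Lf S).
  have : 0 <= \sum_S Lf S by apply: sumr_ge0 => S _; exact: ltW (HL S).1.
  lra.
move=> x xs xb sg.
pose S : {set 'I_p} := finset (fun i => `[< F i x >]).
have Sx : forall i, F i x <-> i \in S by move=> i; rewrite /S inE; split => [H|/asboolP //]; apply/asboolP.
have [LS0 HLS] := HL S.
apply: le_trans (HLS x xs xb sg Sx) _.
apply: ler_wpM2r; first exact: sqr_ge0.
rewrite (bigD1 S) //=.
have : 0 <= \sum_(S' | S' != S) Lf S'.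
  by apply: sumr_ge0 => S' _; exact: ltW (HL S').1.
lra.
Qed.
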